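(* Let $w\in W_+$ and let $\ell\in\{1,\dots,m\}$ be such that $w\theta_\ell\neq\theta$. Then $\theta\notin wR_\ell$.
   Context: $R$ is an irreducible reduced root system in $V=\mathbb C^n$ with Weyl group $W$, positive roots $R_+$, simple roots $\Delta=\{\alpha_1,\dots,\alpha_n\}$ and maximal root $\theta$ (with respect to $\Delta$). Fix $S_0\subset\Delta$, $W_+=\{w\in W:wS_0\subset R_+\}$, $V_0=\mathrm{span}(S_0)$, and let $R_0=V_0\cap R$ (a root system with simple roots $S_0$) decompose into irreducible components $R_0=\bigsqcup_{\ell=1}^m R_\ell$; $S_\ell=S_0\cap R_\ell$ and $\theta_\ell$ is the maximal root of $R_\ell$ with respect to $S_\ell$. *)

(* Defs.v *)
(* Root systems à la Bourbaki, over a numeric closed field F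
   (the paper's C is the model case). Vectors of V = F^n are row vectors. *)
From HB Require Import structures.
From mathcomp Require Import all_boot all_order all_algebra.
Set Implicit Arguments. Unset Strict Implicit. Unset Printing Implicit Defensive.
Import Order.TTheory GRing.Theory Num.Theory.
Local Open Scope ring_scope.

Section RootSystems.
Variables (F : numClosedFieldType) (n : nat).
Local Notation vec := 'rV[F]_n.

(* the natural pairing V x V^* -> F, with V^* identified with row vectors *)
Definition pairing (x y : vec) : F := (x *m y^T) 0 0.

Definition span_mx (s : seq vec) : 'M[F]_(size s, n) := \matrix_(i < size s) nth 0 s i.

(* reflection s_a : x |-> x - <x, a^v> a, acting on rows by right multiplication *)
Definition refl_mx (cor : vec -> vec) (a : vec) : 'M[F]_n :=
  1%:M - (cor a)^T *m a.

Definition is_root_system (R : seq vec) (cor : vec -> vec) : Prop :=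
  [/\ uniq R, (0 : vec) \notin R, row_full (span_mx R) &
      forall a, a \in R ->
        [/\ pairing a (cor a) = 2,
            forall b, b \in R -> b *m refl_mx cor a \in R &
            forall b, b \in R -> exists z : int, pairing b (cor a) = z%:~R]].

Definition reduced (R : seq vec) : Prop :=
  forall a c, a \in R -> c *: a \in R -> c = 1 \/ c = -1.

Definition direct_parts (X : seq vec) (P : pred vec) : Prop :=
  \rank (span_mx (filter P X) :&: span_mx (filter (predC P) X))%MS = 0%N.

(* irreducible (Bourbaki): nonempty, and V is not a nontrivial direct sum
   V1 + V2 with X contained in V1 \cup V2 *)
Definition irreducible (X : seq vec) : Prop :=
  X != [::] /\
  forall P : pred vec, has P X -> has (predC P) X -> ~ direct_parts X P.

Definition irr_component (X C : seq vec) : Prop :=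
  exists P : pred vec, [/\ C = filter P X, direct_parts X P & irreducible C].

Inductive weyl (R : seq vec) (cor : vec -> vec) : 'M[F]_n -> Prop :=
| weyl_one : weyl R cor 1%:M
| weyl_refl a w : a \in R -> weyl R cor w -> weyl R cor (refl_mx cor a *m w).

Definition nonneg_comb (D : 'I_n -> vec) (J : {set 'I_n}) (x : vec) : Prop :=
  exists k : 'I_n -> nat,
    (forall i, i \notin J -> k i = 0%N) /\ x = \sum_i (k i)%:R *: D i.

Definition is_base (R : seq vec) (D : 'I_n -> vec) : Prop :=
  [/\ forall i, D i \in R, row_free (\matrix_i D i) &
      forall b, b \in R -> nonneg_comb D setT b \/ nonneg_comb D setT (- b)].

Definition positive_root (R : seq vec) (D : 'I_n -> vec) (b : vec) : Prop :=
  b \in R /\ nonneg_comb D setT b.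

Definition maximal_root (D : 'I_n -> vec) (J : {set 'I_n}) (X : seq vec)
  (theta : vec) : Prop :=
  theta \in X /\ forall b, b \in X -> nonneg_comb D J (theta - b).

Definition V0_mx (D : 'I_n -> vec) (I : {set 'I_n}) : 'M[F]_n :=
  \matrix_i (if i \in I then D i else 0).

Definition R0 (R : seq vec) (D : 'I_n -> vec) (I : {set 'I_n}) : seq vec :=
  [seq b <- R | (b <= V0_mx D I)%MS].

Definition S_of (D : 'I_n -> vec) (I : {set 'I_n}) (C : seq vec) : {set 'I_n} :=
  [set i in I | D i \in C].

Definition W_plus (R : seq vec) (cor : vec -> vec) (D : 'I_n -> vec)
  (I : {set 'I_n}) (w : 'M[F]_n) : Prop :=
  weyl R cor w /\ forall i, i \in I -> positive_root R D (D i *m w).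

End RootSystems.

(* Main.v *)
Require Import Defs.
From HB Require Import structures.
From mathcomp Require Import all_boot all_order all_algebra.
Import Order.TTheory GRing.Theory Num.Theory.
Local Open Scope ring_scope.

Section Aux.
Variables (F : numClosedFieldType) (n : nat) (D : 'I_n -> 'rV[F]_n).
Local Notation NN := (nonneg_comb D setT).

Lemma nn0 : NN 0.
Proof. exists (fun _ => 0%N); split => //; rewrite big1 // => j _; by rewrite scale0r. Qed.

Lemma nnD x y : NN x -> NN y -> NN (x + y).
Proof.
move=> [k1 [_ ->]] [k2 [_ ->]]; exists (fun i => (k1 i + k2 i)%N); split.
  by move=> i; rewrite in_setT.
by rewrite -big_split /=; apply: eq_bigr => i _; rewrite natrD scalerDl.
Qed.

Lemma nnZ c x : NN x -> NN (c%:R *: x).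
Proof.
move=> [k [_ ->]]; exists (fun i => (c * k i)%N); split.
  by move=> i; rewrite in_setT.
by rewrite scaler_sumr; apply: eq_bigr => i _; rewrite natrM scalerA.
Qed.

Lemma nn_eq0 x : row_free (\matrix_i D i) -> NN x -> NN (- x) -> x = 0.
Proof.
move=> fr [k1 [_ E1]] [k2 [_ E2]].
have H : (\row_i ((k1 i + k2 i)%N%:R : F)) *m (\matrix_i D i) = 0.
  rewrite mulmx_sum_row.
  apply: (@etrans _ _ (x + - x)); last by rewrite subrr.
  rewrite [in X in _ = X + _]E1 E2 -big_split /=; apply: eq_bigr => i _.
  by rewrite mxE rowK natrD scalerDl.
move/eqP: H; rewrite mulmx_free_eq0 // => /eqP H.
rewrite E1 big1 // => i _.
have := congr1 (fun M : 'rV[F]_n => M 0 i) H; rewrite !mxE => /eqP.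
rewrite pnatr_eq0 addn_eq0 => /andP [/eqP -> _]; by rewrite scale0r.
Qed.

Lemma nn_sum (I : {set 'I_n}) (k : 'I_n -> nat) (f : 'I_n -> 'rV[F]_n) :
  (forall i, i \in I -> NN (f i)) -> (forall i, i \notin I -> k i = 0%N) ->
  NN (\sum_i (k i)%:R *: f i).
Proof.
move=> Hf Hk; apply: (big_ind NN); [exact: nn0 | exact: nnD |] => i _.
case: (boolP (i \in I)) => iI; first exact/nnZ/Hf.
by rewrite Hk // scale0r; exact: nn0.
Qed.

Lemma weyl_stable (R : seq 'rV[F]_n) cor w b : is_root_system R cor -> weyl R cor w ->
  b \in R -> b *m w \in R.
Proof.
move=> [_ _ _ HR] Hw; elim: Hw b => [|a w' aR _ IH] b bR.
  by rewrite mulmx1.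
rewrite mulmxA; apply: IH; have [_ Hr _] := HR a aR; exact: Hr.
Qed.
End Aux.

Theorem mainTheorem4 (F : numClosedFieldType) (n : nat)
  (R : seq 'rV[F]_n) (cor : 'rV[F]_n -> 'rV[F]_n) (D : 'I_n -> 'rV[F]_n)
  (theta : 'rV[F]_n) (I : {set 'I_n}) (Rl : seq 'rV[F]_n) (theta_l : 'rV[F]_n)
  (w : 'M[F]_n) :
  is_root_system R cor -> reduced R -> irreducible R ->
  is_base R D -> maximal_root D setT R theta ->
  irr_component (R0 R D I) Rl ->
  maximal_root D (S_of D I Rl) Rl theta_l ->
  W_plus R cor D I w ->
  theta_l *m w != theta ->
  theta \notin [seq b *m w | b <- Rl].
Proof.
move=> HRS _ _ [_ fr _] [_ Hmax] [P [-> _ _]] [thl Hl] [Hw Hpos] Hne.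
apply/negP => /mapP [b bRl Eb].
have inR : forall x, x \in [seq x <- R0 R D I | P x] -> x \in R.
  by move=> x; rewrite mem_filter /R0 mem_filter => /andP [_ /andP [_ ->]].
have [k [Hk Ek]] := Hl b bRl.
have N1 : nonneg_comb D setT (theta_l *m w - theta).
  rewrite Eb -mulmxBl Ek mulmx_suml.
  under eq_bigr => i _ do rewrite -scalemxAl.
  apply: (@nn_sum _ _ D (S_of D I [seq x <- R0 R D I | P x])) => // i.
  rewrite /S_of inE => /andP [iI _]; by have [] := Hpos i iI.
have N2 : nonneg_comb D setT (- (theta_l *m w - theta)).
  rewrite opprB; apply: Hmax; apply: weyl_stable HRS Hw _; exact: inR.
move/eqP: Hne; apply; apply/eqP; rewrite -subr_eq0; apply/eqP.
exact: nn_eq0 fr N1 N2.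
Qed.
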